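(* Let $n\ge 3$ be odd and let $C,\widetilde C$ be self-dual codes in $\mathbb{F}_2^{n+1}$. Then there exists an orthogonal matrix $P\in\mathcal{O}_n(\mathbb{F}_2)$ such that $\widetilde C=(P\oplus 1)C$ and, moreover, for every basis $\mathcal{B}=\{\mathbf{y}_1,\ldots,\mathbf{y}_m\}\in\mathfrak{B}_C$, the set $\widetilde{\mathcal{B}}=\{(P\oplus1)\mathbf{y}_1,\ldots,(P\oplus1)\mathbf{y}_m\}$ lies in $\mathfrak{B}_{\widetilde C}$ and: (i) $\mathcal{B}\in\mathfrak{B}_C^2$ iff $\widetilde{\mathcal{B}}\in\mathfrak{B}_{\widetilde C}^2$; (ii) if $A'_{\mathcal{B}}\in\mathcal{F}_C$ then $PA'_{\mathcal{B}}P^{\top}=A'_{\widetilde{\mathcal{B}}}\in\mathcal{F}_{\widetilde C}$; (iii) if $A''_{\mathcal{B}}\in\mathcal{F}_C$ then $PA''_{\mathcal{B}}P^{\top}=A''_{\widetilde{\mathcal{B}}}\in\mathcal{F}_{\widetilde C}$; (iv) $\{PAP^{\top}:A\in\mathcal{F}_C\}=\mathcal{F}_{\widetilde C}$.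
   Context: $\mathbb{F}_2$ is the binary field. $\mathcal{O}_n(\mathbb{F}_2)$ is the group of $P\in GL_n(\mathbb{F}_2)$ with $P^{\top}=P^{-1}$; $P\oplus 1$ is the $(n+1)\times(n+1)$ block-diagonal matrix with blocks $P$ and $1$, and $(P\oplus1)C=\{(P\oplus1)\mathbf{y}:\mathbf{y}\in C\}$. A code $C\subseteq\mathbb{F}_2^{n+1}$ is self-dual if $C=C^\perp$ (standard dot product); then $\dim C=m:=\frac{n+1}{2}$. For $\mathbf{y}\in\mathbb{F}_2^{n+1}$, $\underline{\mathbf{y}}\in\mathbb{F}_2^n$ is $\mathbf{y}$ with its last entry deleted; $\mathbf{x}^2:=\mathbf{x}\mathbf{x}^{\top}$. $\mathfrak{B}_C$ is the set of bases of $C$, $\mathfrak{B}_C^2$ those bases containing an even number of vectors with last entry $1$. For $\mathcal{B}=\{\mathbf{y}_1,\ldots,\mathbf{y}_m\}\in\mathfrak{B}_C$, $A'_{\mathcal{B}}=I_n+\sum_{i=1}^m\underline{\mathbf{y}_i}^2$ and $A''_{\mathcal{B}}=I_n+\sum_{i=1}^m\underline{\mathbf{y}_i}^2+(\underline{\mathbf{y}_1}+\cdots+\underline{\mathbf{y}_m})^2$. $\mathcal{F}_C=\{A'_{\mathcal{B}}:\mathcal{B}\in\mathfrak{B}_C^2\}\cup\{A''_{\mathcal{B}}:\mathcal{B}\in\mathfrak{B}_C\}$ if $m$ is even, and $\mathcal{F}_C=\{A'_{\mathcal{B}}:\mathcal{B}\in\mathfrak{B}_C^2\}$ if $m$ is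 odd. *)

(* Defs.v *)
From HB Require Import structures.
From mathcomp Require Import all_boot all_order all_algebra.
Set Implicit Arguments. Unset Strict Implicit. Unset Printing Implicit Defensive.
Import GRing.Theory.
Local Open Scope ring_scope.

Notation F2 := 'F_2.

Definition dual_code (k : nat) (C : {set 'cV[F2]_k}) : {set 'cV[F2]_k} :=
  [set x | [forall y in C, x^T *m y == 0]].

Definition self_dual (k : nat) (C : {set 'cV[F2]_k}) : Prop := C = dual_code C.

Definition is_basis (k : nat) (C : {set 'cV[F2]_k}) (s : seq 'cV[F2]_k) : Prop :=
  free s /\ forall x, (x \in C) = (x \in <<s>>%VS).

Definition last_entry (n : nat) (y : 'cV[F2]_n.+1) : F2 := y ord_max 0.

Definition even_basis (n : nat) (C : {set 'cV[F2]_n.+1}) (s : seq 'cV[F2]_n.+1) : Prop :=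
  is_basis C s /\ ~~ odd (count (fun y => last_entry y == 1) s).

Definition under (n : nat) (y : 'cV[F2]_n.+1) : 'cV[F2]_n :=
  \col_(i < n) y (widen_ord (leqnSn n) i) 0.

Definition sqv (n : nat) (x : 'cV[F2]_n) : 'M[F2]_n := x *m x^T.

Definition Aprime (n : nat) (s : seq 'cV[F2]_n.+1) : 'M[F2]_n :=
  1%:M + \sum_(y <- s) sqv (under y).

Definition Adprime (n : nat) (s : seq 'cV[F2]_n.+1) : 'M[F2]_n :=
  1%:M + \sum_(y <- s) sqv (under y) + sqv (\sum_(y <- s) under y).

(* membership in the family F_C, with m = (n+1)/2 *)
Definition inF (n : nat) (C : {set 'cV[F2]_n.+1}) (A : 'M[F2]_n) : Prop :=
  (exists s, even_basis C s /\ A = Aprime s)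
  \/ (~~ odd (n.+1)./2 /\ exists s, is_basis C s /\ A = Adprime s).

Definition dsum1 (n : nat) (P : 'M[F2]_n) : 'M[F2]_n.+1 :=
  castmx (addn1 n, addn1 n) (block_mx P 0 0 (1%:M : 'M[F2]_1)).

Definition orthogonal_mx (n : nat) (P : 'M[F2]_n) : Prop :=
  P \in unitmx /\ P^T = invmx P.

Definition image_code (k : nat) (Q : 'M[F2]_k) (C : {set 'cV[F2]_k}) : {set 'cV[F2]_k} :=
  [set Q *m y | y in C].

(* Main.v *)
Require Import Defs.
From HB Require Import structures.
From mathcomp Require Import all_boot all_order all_algebra.
Set Implicit Arguments. Unset Strict Implicit. Unset Printing Implicit Defensive.
Import GRing.Theory.
Local Open Scope ring_scope.

Lemma F2cases (x : 'F_2) : x = 0 \/ x = 1.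
Proof. case: x => [[|[|k]] Hk]; [left|right|]; try exact: val_inj. by []. Qed.

Lemma F2addxx (x : 'F_2) : x + x = 0.
Proof. by case: (F2cases x) => ->; apply: val_inj. Qed.

Lemma F2mulxx (x : 'F_2) : x * x = x.
Proof. by case: (F2cases x) => ->; apply: val_inj. Qed.

Lemma F2neq0 (x : 'F_2) : x != 0 -> x = 1.
Proof. by case: (F2cases x) => -> //; rewrite eqxx. Qed.

Definition dot k (x y : 'cV['F_2]_k) : 'F_2 := (x^T *m y) 0 0.

Lemma dotE k (x y : 'cV['F_2]_k) : dot x y = \sum_i x i 0 * y i 0.
Proof. by rewrite /dot mxE; apply: eq_bigr => i _; rewrite mxE. Qed.

Lemma dotC k (x y : 'cV['F_2]_k) : dot x y = dot y x.
Proof. by rewrite !dotE; apply: eq_bigr => i _; rewrite mulrC. Qed.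

Lemma dotDl k (x y z : 'cV['F_2]_k) : dot (x + y) z = dot x z + dot y z.
Proof. by rewrite !dotE -big_split; apply: eq_bigr => i _; rewrite !mxE mulrDl. Qed.

Lemma dotDr k (x y z : 'cV['F_2]_k) : dot z (x + y) = dot z x + dot z y.
Proof. by rewrite dotC dotDl !(dotC z). Qed.

Lemma dotZl k c (x z : 'cV['F_2]_k) : dot (c *: x) z = c * dot x z.
Proof. by rewrite !dotE mulr_sumr; apply: eq_bigr => i _; rewrite !mxE mulrA. Qed.

Lemma dotZr k c (x z : 'cV['F_2]_k) : dot z (c *: x) = c * dot z x.
Proof. by rewrite dotC dotZl dotC. Qed.

Lemma mx1_eq0 (M : 'M['F_2]_1) : (M == 0) = (M 0 0 == 0).
Proof.
apply/eqP/eqP => [->|H]; first by rewrite mxE.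
by apply/matrixP => i j; rewrite !ord1 H mxE.
Qed.

Lemma in_dual k (C : {set 'cV['F_2]_k}) x :
  (x \in dual_code C) = [forall y in C, dot x y == 0].
Proof.
rewrite inE; apply/forallP/forallP => H y; move: (H y);
by rewrite mx1_eq0.
Qed.

Lemma under_lin n (y z : 'cV['F_2]_n.+1) c :
  under (c *: y + z) = c *: under y + under z.
Proof. by apply/matrixP => i j; rewrite !mxE. Qed.

Lemma last_lin n (y z : 'cV['F_2]_n.+1) c :
  last_entry (c *: y + z) = c * last_entry y + last_entry z.
Proof. by rewrite /last_entry !mxE. Qed.

Lemma dot_split n (y z : 'cV['F_2]_n.+1) :
  dot y z = dot (under y) (under z) + last_entry y * last_entry z.
Proof.
by rewrite !dotE big_ord_recr /=; congr (_ + _); apply: eq_bigr => i _; rewrite !mxE.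
Qed.

Lemma vec_ext n (y z : 'cV['F_2]_n.+1) :
  under y = under z -> last_entry y = last_entry z -> y = z.
Proof.
move=> Hu Hl; apply/matrixP => i j; rewrite !ord1.
case: (ltnP i n) => Hi.
  have -> : i = widen_ord (leqnSn n) (Ordinal Hi) by apply: val_inj.
  by move/matrixP: Hu => /(_ (Ordinal Hi) 0); rewrite !mxE.
have -> : i = ord_max by apply: val_inj => /=; apply/eqP; rewrite eqn_leq Hi -ltnS ltn_ord.
exact: Hl.
Qed.

Lemma dsum1E_ww n (P : 'M['F_2]_n) i j :
  dsum1 P (widen_ord (leqnSn n) i) (widen_ord (leqnSn n) j) = P i j.
Proof.
rewrite /dsum1 castmxE.
have -> : cast_ord (esym (addn1 n, addn1 n).1) (widen_ord (leqnSn n) i) = lshift 1 i by apply: val_inj.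
have -> : cast_ord (esym (addn1 n, addn1 n).2) (widen_ord (leqnSn n) j) = lshift 1 j by apply: val_inj.
by rewrite block_mxEul.
Qed.

Lemma dsum1E_wm n (P : 'M['F_2]_n) i :
  dsum1 P (widen_ord (leqnSn n) i) ord_max = 0.
Proof.
rewrite /dsum1 castmxE.
have -> : cast_ord (esym (addn1 n, addn1 n).1) (widen_ord (leqnSn n) i) = lshift 1 i by apply: val_inj.
have -> : cast_ord (esym (addn1 n, addn1 n).2) ord_max = rshift n (0 : 'I_1) by apply: val_inj => /=; rewrite addn0.
by rewrite block_mxEur mxE.
Qed.

Lemma dsum1E_mw n (P : 'M['F_2]_n) j :
  dsum1 P ord_max (widen_ord (leqnSn n) j) = 0.
Proof.
rewrite /dsum1 castmxE.
have -> : cast_ord (esym (addn1 n, addn1 n).2) (widen_ord (leqnSn n) j) = lshift 1 j by apply: val_inj.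
have -> : cast_ord (esym (addn1 n, addn1 n).1) ord_max = rshift n (0 : 'I_1) by apply: val_inj => /=; rewrite addn0.
by rewrite block_mxEdl mxE.
Qed.

Lemma dsum1E_mm n (P : 'M['F_2]_n) : dsum1 P ord_max ord_max = 1.
Proof.
rewrite /dsum1 castmxE.
have -> : cast_ord (esym (addn1 n, addn1 n).2) ord_max = rshift n (0 : 'I_1) by apply: val_inj => /=; rewrite addn0.
by rewrite ?block_mxEdr mxE.
Qed.

Lemma under_dsum1 n (P : 'M['F_2]_n) y : under (dsum1 P *m y) = P *m under y.
Proof.
apply/matrixP => i j; rewrite !ord1 !mxE big_ord_recr /= dsum1E_wm mul0r addr0.
by apply: eq_bigr => k _; rewrite dsum1E_ww !mxE.
Qed.

Lemma last_dsum1 n (P : 'M['F_2]_n) y : last_entry (dsum1 P *m y) = last_entry y.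
Proof.
rewrite /last_entry !mxE big_ord_recr /= dsum1E_mm mul1r big1 ?add0r // => k _.
by rewrite dsum1E_mw mul0r.
Qed.

Lemma orthoE n (P : 'M['F_2]_n) : orthogonal_mx P -> P^T *m P = 1%:M /\ P *m P^T = 1%:M.
Proof. by case=> U ->; rewrite mulVmx // mulmxV. Qed.

Lemma ortho_of n (P : 'M['F_2]_n) : P^T *m P = 1%:M -> orthogonal_mx P.
Proof.
move=> H; have [_ U] := mulmx1_unit H; split => //.
by rewrite -[P^T]mulmx1 -(mulmxV U) mulmxA H mul1mx.
Qed.

Lemma ortho_tr n (P : 'M['F_2]_n) : orthogonal_mx P -> orthogonal_mx P^T.
Proof. by move=> /orthoE [_ H]; apply: ortho_of; rewrite trmxK. Qed.

Lemma ortho_mul n (P Q : 'M['F_2]_n) : orthogonal_mx P -> orthogonal_mx Q -> orthogonal_mx (P *m Q).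
Proof.
move=> /orthoE [HP _] /orthoE [HQ _]; apply: ortho_of.
by rewrite trmx_mul mulmxA -(mulmxA Q^T) HP mulmx1 HQ.
Qed.

Lemma dot_mul n (P : 'M['F_2]_n) (u w : 'cV['F_2]_n) : orthogonal_mx P -> dot (P *m u) (P *m w) = dot u w.
Proof. by move=> /orthoE [H _]; rewrite /dot trmx_mul -mulmxA (mulmxA P^T) H mul1mx. Qed.

Lemma dot_dsum1 n (P : 'M['F_2]_n) (y z : 'cV['F_2]_n.+1) : orthogonal_mx P ->
  dot (dsum1 P *m y) (dsum1 P *m z) = dot y z.
Proof. by move=> H; rewrite dot_split (dot_split y) !under_dsum1 !last_dsum1 dot_mul. Qed.

Lemma dsum1K n (P : 'M['F_2]_n) (y : 'cV['F_2]_n.+1) : orthogonal_mx P -> dsum1 P^T *m (dsum1 P *m y) = y.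
Proof.
move=> /orthoE [H _]; apply: vec_ext; last by rewrite !last_dsum1.
by rewrite !under_dsum1 mulmxA H mul1mx.
Qed.

Lemma dsum1K' n (P : 'M['F_2]_n) (y : 'cV['F_2]_n.+1) : orthogonal_mx P -> dsum1 P *m (dsum1 P^T *m y) = y.
Proof. by move=> H; have := dsum1K y (ortho_tr H); rewrite trmxK. Qed.

Lemma image_sd n (P : 'M['F_2]_n) (C : {set 'cV['F_2]_n.+1}) : orthogonal_mx P -> self_dual C ->
  self_dual (image_code (dsum1 P) C).
Proof.
move=> HP HC; apply/setP => x; rewrite in_dual.
apply/imsetP/forallP => [[y Hy ->] z|H].
  apply/implyP => /imsetP [w Hw ->]; rewrite dot_dsum1 //.
  by move: Hy; rewrite HC in_dual => /forallP /(_ w); rewrite Hw.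
exists (dsum1 P^T *m x); last by rewrite dsum1K'.
rewrite HC in_dual; apply/forallP => w; apply/implyP => Hw.
rewrite -(dot_dsum1 _ _ HP) dsum1K' //; move/implyP: (H (dsum1 P *m w)); apply.
by apply/imsetP; exists w.
Qed.

Lemma sd_dot n (C : {set 'cV['F_2]_n}) x y : self_dual C -> x \in C -> y \in C -> dot x y = 0.
Proof. by move=> HC; rewrite {1}HC in_dual => /forallP H Hy; apply/eqP; move/implyP: (H y); apply. Qed.

Lemma sd_add n (C : {set 'cV['F_2]_n}) x y : self_dual C -> x \in C -> y \in C -> x + y \in C.
Proof.
move=> HC Hx Hy; rewrite HC in_dual; apply/forallP => z; apply/implyP => Hz.
by rewrite dotDl !(sd_dot HC _ Hz) ?addr0.
Qed.

Lemma dot1 n (x : 'cV['F_2]_n) : dot (const_mx 1) x = dot x x.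
Proof. by rewrite !dotE; apply: eq_bigr => i _; rewrite mxE mul1r F2mulxx. Qed.

Lemma sd_one n (C : {set 'cV['F_2]_n}) : self_dual C -> const_mx 1 \in C.
Proof.
move=> HC; rewrite HC in_dual; apply/forallP => z; apply/implyP => Hz.
by rewrite dot1 (sd_dot HC Hz Hz).
Qed.

Lemma mxaddxx m k (M : 'M['F_2]_(m, k)) : M + M = 0.
Proof. by apply/matrixP => i j; rewrite !mxE F2addxx. Qed.

Lemma mulmx1x k (u : 'cV['F_2]_k) (K : 'M['F_2]_1) : u *m K = K 0 0 *: u.
Proof. by apply/matrixP => i j; rewrite !ord1 !mxE big_ord1 mulrC. Qed.

Lemma trans_ortho n (u : 'cV['F_2]_n) : dot u u = 0 ->
  orthogonal_mx (1%:M + u *m u^T).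
Proof.
move=> H; have Hu : u^T *m u = 0 by apply/eqP; rewrite mx1_eq0; apply/eqP.
apply: ortho_of; rewrite [(_ + _)^T]linearD /= trmx_mul trmxK trmx1.
rewrite mulmxDl !mulmxDr !mul1mx mulmx1 mulmxA -(mulmxA u) Hu mulmx0 mul0mx addr0.
by rewrite -addrA mxaddxx addr0.
Qed.

Lemma existsP_main n (C Ct : {set 'cV['F_2]_n.+1}) : self_dual C -> self_dual Ct ->
  exists P, orthogonal_mx P /\ Ct = image_code (dsum1 P) C.
Proof.
move=> HC HCt.
suff H : forall k P, orthogonal_mx P -> (#|Ct :\: image_code (dsum1 P) C| <= k)%N ->
  exists P, orthogonal_mx P /\ Ct = image_code (dsum1 P) C.
  apply: (H _ 1%:M) => //; apply: ortho_of; by rewrite trmx1 mul1mx.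
elim=> [|k IH] P HP Hk;
  set A := image_code (dsum1 P) C; have HA : self_dual A := image_sd HP HC;
  (have [sub|/subsetPn [x xCt xA]] := boolP (Ct \subset A));
  try (exists P; split => //; apply/eqP; rewrite eqEsubset sub /=;
    apply/subsetP => z zA; rewrite HCt in_dual; apply/forall_inP => y yCt;
    by rewrite (sd_dot HA zA) // (subsetP sub)).
  suff : (0 < #|Ct :\: A|)%N by rewrite leqNgt in Hk; rewrite (negbTE Hk).
  by apply/card_gt0P; exists x; apply/setDP.
have [a aA ax] : exists2 a, a \in A & dot x a != 0.
  move: xA; rewrite {1}HA in_dual => /forallPn [a]; rewrite negb_imply => /andP [? ?].
  by exists a.
have xx : dot x x = 0 by apply: (sd_dot HCt).
have [a' a'A [a'x a'l]] : exists2 a', a' \in A & dot x a' = 1 /\ last_entry a' = last_entry x.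
  case E: (last_entry a == last_entry x).
    by exists a => //; split; [apply: F2neq0 | apply/eqP].
  exists (a + const_mx 1); first by apply: sd_add => //; apply: sd_one.
  split; first by rewrite dotDr (dotC x (const_mx 1)) dot1 xx addr0; apply: F2neq0.
  move: E; rewrite /last_entry !mxE.
  by case: (F2cases (a ord_max 0)) => ->; case: (F2cases (x ord_max 0)) => ->;
    rewrite ?eqxx ?add0r ?F2addxx.
set v := a' + x.
have vl : last_entry v = 0 by rewrite /v /last_entry mxE -/(last_entry a') -/(last_entry x) a'l F2addxx.
set u := under v.
have uu : dot u u = 0.
  have : dot v v = 0.
    by rewrite /v !dotDl !dotDr (sd_dot HA a'A a'A) xx (dotC a' x) a'x add0r addr0 F2addxx.
  by rewrite dot_split vl mul0r addr0.
set P' := (1%:M + u *m u^T) *m P.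
have HP' : orthogonal_mx P' by apply: ortho_mul => //; apply: trans_ortho.
have key : forall y, dsum1 P' *m y = dsum1 P *m y + dot (dsum1 P *m y) v *: v.
  move=> y; apply: vec_ext.
    rewrite addrC under_lin !under_dsum1 /P' -mulmxA mulmxDl mul1mx.
    rewrite addrC; congr (_ + _); rewrite -mulmxA mulmx1x (dot_split _ v) vl mulr0 addr0.
    by rewrite under_dsum1 dotC /dot -/u.
  by rewrite addrC last_lin vl mulr0 add0r !last_dsum1.
apply: (IH P') => //.
set A' := image_code (dsum1 P') C.
have : (Ct :\: A' \proper Ct :\: A).
  apply/properP; split.
    apply/subsetP => z /setDP [zCt zA']; apply/setDP; split => //.
    apply: contra zA' => zA; have := zA; move=> /imsetP [y yC zE]; apply/imsetP; exists y => //.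
    rewrite key -zE /v dotDr (sd_dot HA zA a'A) (sd_dot HCt zCt xCt).
    by rewrite addr0 scale0r addr0.
  exists x; first by apply/setDP.
  apply/negP => /setDP [_]; apply/negP/negPn.
  move: (a'A) => /imsetP [y0 y0C a'E]; apply/imsetP; exists y0 => //.
  rewrite key -a'E /v dotDr (sd_dot HA a'A a'A) (dotC a' x) a'x add0r scale1r addrA.
  by rewrite mxaddxx add0r.
by move/proper_card => lt; rewrite -ltnS (leq_trans lt Hk).
Qed.

Section Transfer.
Variables (n : nat) (P : 'M['F_2]_n) (C Ct : {set 'cV['F_2]_n.+1}).
Hypothesis HP : orthogonal_mx P.
Hypothesis HCt : Ct = image_code (dsum1 P) C.

Lemma basis_transfer (s : seq 'cV['F_2]_n.+1) : is_basis C s ->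
  is_basis Ct [seq dsum1 P *m y | y <- s].
Proof.
move=> [fs sp].
pose f : 'End('cV['F_2]_n.+1) := linfun (mulmx (dsum1 P)).
have fE : [seq dsum1 P *m y | y <- s] = map f s by apply: eq_map => y; rewrite lfunE.
rewrite fE; split.
  rewrite /free size_map -limg_span limg_dim_eq //.
  have /lker0P/eqP -> : injective f.
    by move=> y z; rewrite !lfunE /= => /(congr1 (mulmx (dsum1 P^T))); rewrite !dsum1K.
  by rewrite capv0.
move=> x; rewrite -limg_span HCt; apply/imsetP/memv_imgP => [[y yC ->]|[y yS ->]].
  by exists y; rewrite ?lfunE // -sp.
by exists y; rewrite ?lfunE // sp.
Qed.

Lemma even_transfer (s : seq 'cV['F_2]_n.+1) : is_basis C s ->
  (even_basis C s <-> even_basis Ct [seq dsum1 P *m y | y <- s]).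
Proof.
move=> Hs; have Hst := basis_transfer Hs.
rewrite /even_basis count_map.
have -> : count (preim (fun y => dsum1 P *m y) (fun y => last_entry y == 1)) s =
   count (fun y => last_entry y == 1) s by apply: eq_count => y /=; rewrite last_dsum1.
tauto.
Qed.

Lemma sqv_mul (w : 'cV['F_2]_n) : sqv (P *m w) = P *m sqv w *m P^T.
Proof. by rewrite /sqv trmx_mul !mulmxA. Qed.

Lemma one_conj : P *m 1%:M *m P^T = 1%:M.
Proof. by rewrite mulmx1; case: (orthoE HP). Qed.

Lemma sum_conj (s : seq 'cV['F_2]_n.+1) (F : 'cV['F_2]_n.+1 -> 'M['F_2]_n) :
  \sum_(y <- s) P *m F y *m P^T = P *m (\sum_(y <- s) F y) *m P^T.
Proof. by rewrite mulmx_sumr mulmx_suml. Qed.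

Lemma Aprime_transfer (s : seq 'cV['F_2]_n.+1) :
  Aprime [seq dsum1 P *m y | y <- s] = P *m Aprime s *m P^T.
Proof.
rewrite /Aprime big_map mulmxDr mulmxDl one_conj -sum_conj; congr (_ + _).
by apply: eq_bigr => y _; rewrite under_dsum1 sqv_mul.
Qed.

Lemma Adprime_transfer (s : seq 'cV['F_2]_n.+1) :
  Adprime [seq dsum1 P *m y | y <- s] = P *m Adprime s *m P^T.
Proof.
rewrite /Adprime !big_map !mulmxDr !mulmxDl one_conj -sum_conj; congr (_ + _ + _).
  by apply: eq_bigr => y _; rewrite under_dsum1 sqv_mul.
rewrite -sqv_mul mulmx_sumr; congr sqv.
by apply: eq_bigr => y _; rewrite under_dsum1.
Qed.

Lemma inF_transfer A : inF C A -> inF Ct (P *m A *m P^T).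
Proof.
case=> [[s [Hs ->]]|[Hm [s [Hs ->]]]].
  left; exists [seq dsum1 P *m y | y <- s]; split; last by rewrite Aprime_transfer.
  by move: (Hs) => [Hb _]; apply/(even_transfer Hb).
right; split => //; exists [seq dsum1 P *m y | y <- s]; split; last by rewrite Adprime_transfer.
exact: basis_transfer.
Qed.

End Transfer.

Lemma image_inv n (P : 'M['F_2]_n) (C : {set 'cV['F_2]_n.+1}) : orthogonal_mx P ->
  image_code (dsum1 P^T) (image_code (dsum1 P) C) = C.
Proof.
move=> HP; apply/setP => x; apply/imsetP/idP => [[y /imsetP [z zC ->] ->]|xC].
  by rewrite dsum1K.
exists (dsum1 P *m x); last by rewrite dsum1K.
by apply/imsetP; exists x.
Qed.
Unset Implicit Arguments.

Theorem theorem8p10 (n : nat) (Hodd : odd n) (Hn : (3 <= n)%N)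
  (C Ct : {set 'cV['F_2]_n.+1}) (HC : self_dual C) (HCt : self_dual Ct) :
  exists P : 'M['F_2]_n,
    orthogonal_mx P /\ Ct = image_code (dsum1 P) C /\
    (forall s : seq 'cV['F_2]_n.+1, is_basis C s ->
       let st := [seq dsum1 P *m y | y <- s] in
       is_basis Ct st /\
       (even_basis C s <-> even_basis Ct st) /\
       (inF C (Aprime s) -> P *m Aprime s *m P^T = Aprime st /\ inF Ct (Aprime st)) /\
       (inF C (Adprime s) -> P *m Adprime s *m P^T = Adprime st /\ inF Ct (Adprime st))) /\
    (forall A : 'M['F_2]_n, inF Ct A <-> exists A0, inF C A0 /\ A = P *m A0 *m P^T).
Proof.
have [P [HP HCt']] := existsP_main HC HCt.
exists P; split => //; split => //; split.
  move=> s Hs /=; split; first exact: (basis_transfer HP HCt' Hs).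
  split; first exact: (even_transfer HP HCt' Hs).
  split => H.
    by split; rewrite Aprime_transfer //; exact: (inF_transfer HP HCt' H).
  by split; rewrite Adprime_transfer //; exact: (inF_transfer HP HCt' H).
move=> A; split.
  move=> H; exists (P^T *m A *m P); split.
    have HC' : C = image_code (dsum1 P^T) Ct by rewrite HCt' image_inv.
    by have := inF_transfer (ortho_tr HP) HC' H; rewrite trmxK.
  by case: (orthoE HP) => _ E; rewrite !mulmxA E mul1mx -mulmxA E mulmx1.
by move=> [A0 [H ->]]; exact: (inF_transfer HP HCt' H).
Qed.
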